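(* Let $g\ge2$, $n\ge1$, let $(t_1,\ldots,t_n)$ be a generic $n$-tuple of elements of $T$, let $l\in\{1,\ldots,n\}$, let $X$ and $Y$ be disjoint sets with $X\sqcup Y=\{c_i\mid i\in\{1,\ldots,n\}\setminus\{l\}\}$, let $(i,j,k)$ be a permutation of $(1,2,3)$, and let $f:\{1,\ldots,n\}\to\{1,2,3\}$ be a function. Then the collection of sections $$\{s^l_{ij}(x), s^l_{ik}(x)\mid x\in\{a_1,\ldots,a_g,b_1,\ldots,b_g\}\cup X\}\cup\{s^l_{f(q),j}(c_q), s^l_{f(q),k}(c_q)\mid c_q\in Y\}$$ has no common zeros on $S_g(t_1,\ldots,t_n)$.
   Context: Let $\Sigma$ be a compact Riemann surface of genus $g$, $p_1,\ldots,p_n\in\Sigma$ distinct points, and fix the presentation $\pi_1(\Sigma\setminus\{p_1,\ldots,p_n\}) = \langle a_1,\ldots,a_g,b_1,\ldots,b_g,c_1,\ldots,c_n \mid \prod_{i=1}^g[a_i,b_i]=\prod_{j=1}^n c_j\rangle$. Let $G=SU(3)$, $T\subset G$ the diagonal maximal torus. An $n$-tuple $(t_1,\ldots,t_n)$ in $T$ is generic if each $t_j$ has centralizer $T$ in $G$ and no product $\lambda_1\cdots\lambda_n$ with $\lambda_i$ an eigenvalue of $t_i$ equals $1$. Let $S_g(t_1,\ldots,t_n) := \{\rho\in\mathrm{Hom}(\pi_1(\Sigma\setminus\{p_1,\ldots,p_n\}),G)\mid\rho(c_i)\sim t_i\ \forall i\}/G$ (conjugation quotient), and $V^l_g(t_1,\ldots,t_n):=\{\rho\mid\rho(c_l)=t_l,\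 \rho(c_i)\sim t_i\ \forall i\}$, a $T$-bundle over $S_g(t_1,\ldots,t_n)$ under conjugation. For $1\le j,k\le 3$ let $\mathbb{C}_{(jk)}$ (resp. $\mathbb{C}_{(j)}$) be the representation of $T$ in which $\mathrm{diag}(e^{i\theta_1},e^{i\theta_2},e^{i\theta_3})$ acts by $e^{i(\theta_j-\theta_k)}$ (resp. $e^{i\theta_j}$), and $L^l_{jk}$ (resp. $L^l_j$) the associated line bundle over $S_g(t_1,\ldots,t_n)$. Two kinds of sections are used (note the comma distinguishing them). (i) For a generator $x\in\{a_1,\ldots,a_g,b_1,\ldots,b_g,c_1,\ldots,c_n\}\setminus\{c_l\}$, $s^l_{jk}(x)$ is the section of $L^l_{jk}$ induced by the $T$-equivariant map $\rho\mapsto(\rho(x))_{jk}$ on $V^l_g(t_1,\ldots,t_n)$; it vanishes at $[\rho]$ iff $(\rho(x))_{jk}=0$ for a representative $\rho\in V^l_g(t_1,\ldots,t_n)$. (ii) For $c_{i'}$ with $i'\neq l$, $s^l_{j,k}(c_{i'})$ is a section of $L^l_j$ defined via a matrix $A\in SU(3)$ with $A\rho(c_{i'})A^{-1}=t_{i'}$ ($\rho\in V^l_g(t_1,\ldots,t_n)$ a representative; $A$ unique up to left multiplication by $T$), taking value given by $A_{jk}$; it vanishes at $[\rho]$ iff $A_{jk}=0$, equivalently iff the $k$-th coordinate of an eigenvector of $\rho(c_{i'})$ with eigenvalue $(t_{i'})_{jj}$ is zero. *)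

(* Defs.v *)
From HB Require Import structures.
From mathcomp Require Import all_boot all_order all_algebra.
From mathcomp Require Import complex.
From mathcomp Require Import reals.
Set Implicit Arguments. Unset Strict Implicit. Unset Printing Implicit Defensive.
Import Order.TTheory GRing.Theory Num.Theory.
Local Open Scope ring_scope.

Section Defs.
Variable R : realType.
Local Notation C := (R[i]).
Local Notation M := ('M[C]_3).

Definition adjm (A : M) : M := (map_mx Num.conj A)^T.

Definition inSU3 (A : M) : Prop := A *m adjm A = 1%:M /\ \det A = 1.

Definition inT (A : M) : Prop := inSU3 A /\ is_diag_mx A.

Definition conjG (A B : M) : Prop := exists P : M, inSU3 P /\ P * A * P^-1 = B.

Definition centralizer_is_T (t : M) : Prop :=
  forall P : M, inSU3 P -> (P * t = t * P <-> inT P).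

Definition generic (n : nat) (t : 'I_n -> M) : Prop :=
  (forall q, inT (t q)) /\
  (forall q, centralizer_is_T (t q)) /\
  (forall lam : 'I_n -> C, (forall q, eigenvalue (t q) (lam q)) ->
      \prod_(q < n) lam q != 1).

Definition commG (x y : M) : M := x * y * x^-1 * y^-1.

(* rho : pi_1 -> SU(3) given by images of generators a_m, b_m, c_q satisfying
   prod_m [a_m, b_m] = prod_q c_q *)
Definition is_rep (g n : nat) (a b : 'I_g -> M) (c : 'I_n -> M) : Prop :=
  (forall m, inSU3 (a m)) /\ (forall m, inSU3 (b m)) /\ (forall q, inSU3 (c q)) /\
  \prod_(m < g) commG (a m) (b m) = \prod_(q < n) c q.

Definition in_V (g n : nat) (t : 'I_n -> M) (l : 'I_n)
  (a b : 'I_g -> M) (c : 'I_n -> M) : Prop :=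
  is_rep a b c /\ c l = t l /\ (forall q, conjG (c q) (t q)).

(* vanishing of s^l_{jk}(x) at [rho] (representative rho in V^l): rho(x)_{jk} = 0 *)
Definition s1_vanishes (x : M) (j k : 'I_3) : Prop := x j k = 0.

(* vanishing of s^l_{j,k}(c_q) at [rho]: A_{jk} = 0 where A in SU(3) with
   A rho(c_q) A^-1 = t_q (A unique up to left multiplication by T) *)
Definition s2_vanishes (cq tq : M) (j k : 'I_3) : Prop :=
  exists A : M, inSU3 A /\ A * cq * A^-1 = tq /\ A j k = 0.
End Defs.

(* Main.v *)
Require Import Defs.
From HB Require Import structures.
From mathcomp Require Import all_boot all_order all_algebra.
From mathcomp Require Import complex.
From mathcomp Require Import reals.
Import Order.TTheory GRing.Theory Num.Theory.
Local Open Scope ring_scope.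
Set Implicit Arguments. Unset Strict Implicit. Unset Printing Implicit Defensive.

Section H.
Variable R : realType.
Local Notation C := (R[i]).
Local Notation M := ('M[C]_3).

Lemma three_cases (x y z w : 'I_3) :
  x != y -> x != z -> y != z -> w != x -> w = y \/ w = z.
Proof.
case: x => [[|[|[|//]]] Hx]; case: y => [[|[|[|//]]] Hy];
case: z => [[|[|[|//]]] Hz]; case: w => [[|[|[|//]]] Hw] //= _ _ _ _;
by [left; apply/val_inj | right; apply/val_inj].
Qed.

Lemma su3_unit (A : M) : inSU3 A -> A \is a GRing.unit.
Proof. by case=> _ hd; rewrite -[_ \is a _]/(A \in unitmx) unitmxE hd unitr1. Qed.

Lemma su3_inv (A : M) : inSU3 A -> A^-1 = adjm A.
Proof.
move=> hA; have hu := su3_unit hA; case: hA => h _.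
by rewrite -[LHS]mulmx1 -h mulmxA mulmxE mulVr // mul1r.
Qed.

Lemma adjmM (A B : M) : adjm (A * B) = adjm B * adjm A.
Proof. by rewrite /adjm -!mulmxE map_mxM trmx_mul. Qed.

Lemma adjmK (A : M) : adjm (adjm A) = A.
Proof.
by apply/matrixP => x y; rewrite /adjm !mxE conjCK.
Qed.

Lemma det_adjm (A : M) : \det (adjm A) = Num.conj (\det A).
Proof. by rewrite /adjm det_tr det_map_mx. Qed.

Lemma su3M (A B : M) : inSU3 A -> inSU3 B -> inSU3 (A * B).
Proof.
move=> hA hB; split; last by rewrite -mulmxE det_mulmx hA.2 hB.2 mulr1.
rewrite adjmM -!mulmxE !mulmxA -(mulmxA A) hB.1 mulmx1; exact: hA.1.
Qed.

Lemma su3V (A : M) : inSU3 A -> inSU3 A^-1.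
Proof.
move=> hA; rewrite su3_inv //; split.
  by rewrite adjmK; apply: mulmx1C; exact: hA.1.
by rewrite det_adjm hA.2 conjC1.
Qed.

Lemma row_nz (A : M) r : A \is a GRing.unit -> ~ (forall x, A r x = 0).
Proof.
move=> hu h0.
have : row r A = 0 by apply/matrixP => a b; rewrite !mxE h0.
rewrite rowE => /(congr1 (fun B => B *m A^-1)).
rewrite -mulmxA mulmxE mulrV // mulmx1 mul0mx => /matrixP /(_ 0 r).
by rewrite !mxE !eqxx /= => /eqP; rewrite oner_eq0.
Qed.

Lemma row_zero (A : M) (r i j k : 'I_3) : i != j -> i != k -> j != k ->
  A r j = 0 -> A r k = 0 -> (delta_mx 0 r : 'rV[C]_3) *m A = A r i *: delta_mx 0 i.
Proof.
move=> hij hik hjk hj hk; rewrite -rowE; apply/matrixP => a x.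
rewrite !mxE (ord1 a) /=.
have [->|hx] := eqVneq x i; first by rewrite mulr1.
rewrite mulr0.
by case: (three_cases hij hik hjk hx) => ->.
Qed.


Lemma eig_inv (A : M) (v : 'rV[C]_3) mu : A \is a GRing.unit ->
  v *m A = mu *: v -> v != 0 -> mu != 0 /\ v *m A^-1 = mu^-1 *: v.
Proof.
move=> hu hv nz.
have e : v = mu *: (v *m A^-1).
  by rewrite scalemxAl -hv -mulmxA mulmxE mulrV // mulmx1.
have mu0 : mu != 0 by apply: contraNneq nz => m0; rewrite e m0 scale0r.
split=> //; by rewrite {2}e scalerA mulVf // scale1r.
Qed.

Lemma comm_eig (a b : M) (v : 'rV[C]_3) al be :
  a \is a GRing.unit -> b \is a GRing.unit ->
  v *m a = al *: v -> v *m b = be *: v -> v != 0 -> v *m commG a b = v.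
Proof.
move=> ua ub ha hb nz.
have [a0 ha'] := eig_inv ua ha nz; have [b0 hb'] := eig_inv ub hb nz.
rewrite /commG -!mulmxE !mulmxA ha -!scalemxAl hb -!scalemxAl ha' -!scalemxAl hb'.
rewrite !scalerA -[RHS]scale1r; congr (_ *: _).
by rewrite (mulrAC al) divff // mul1r divff.
Qed.

Lemma prod_eig n (F : 'I_n -> M) (mu : 'I_n -> C) (v : 'rV[C]_3) :
  (forall q, v *m F q = mu q *: v) -> v *m (\prod_q F q) = (\prod_q mu q) *: v.
Proof.
move=> h; apply: (big_rec2 (fun m (B : M) => v *m B = m *: v)).
  by rewrite mulmx1 scale1r.
move=> q m B _ hB; rewrite -mulmxE mulmxA h -scalemxAl hB scalerA.
done.
Qed.

Lemma conj_eig (P c t : M) (v : 'rV[C]_3) la : P \is a GRing.unit ->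
  P * c * P^-1 = t -> v *m c = la *: v -> v != 0 -> eigenvalue t la.
Proof.
move=> hu ht hv nz; apply/eigenvalueP; exists (v *m P^-1).
  rewrite -ht -!mulmxE !mulmxA -(mulmxA v P^-1 P).
  have -> : P^-1 *m P = 1%:M by rewrite mulmxE mulVr.
  by rewrite mulmx1 hv scalemxAl.
apply: contraNneq nz => h0.
have e : v = v *m P^-1 *m P by rewrite -mulmxA mulmxE mulVr // mulmx1.
by rewrite e h0 mul0mx.
Qed.

Lemma diag_eig (t : M) (f : 'I_3) : is_diag_mx t ->
  (delta_mx 0 f : 'rV[C]_3) *m t = t f f *: delta_mx 0 f.
Proof.
move=> /is_diag_mxP hd; rewrite -rowE; apply/matrixP => a x.
rewrite !mxE (ord1 a) /=.
have [->|hx] := eqVneq x f; first by rewrite mulr1.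
by rewrite mulr0 hd // eq_sym.
Qed.

Lemma delta_nz (f : 'I_3) : (delta_mx 0 f : 'rV[C]_3) != 0.
Proof.
apply/eqP => /matrixP /(_ 0 f); rewrite !mxE !eqxx /= => /eqP.
by rewrite oner_eq0.
Qed.


Lemma ycase (c t : M) (i j k fq : 'I_3) : i != j -> i != k -> j != k ->
  centralizer_is_T t -> is_diag_mx t ->
  s2_vanishes c t fq j -> s2_vanishes c t fq k ->
  (delta_mx 0 i : 'rV[C]_3) *m c = t fq fq *: delta_mx 0 i.
Proof.
move=> hij hik hjk hC dt [A1 [s1 [h1 z1]]] [A2 [s2 [h2 z2]]].
have u1 := su3_unit s1; have u2 := su3_unit s2.
pose D := A2 * A1^-1.
have sD : inSU3 D := su3M s2 (su3V s1).
have DA : D * A1 = A2 by rewrite /D divrK.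
have ct : D * t = t * D.
  by rewrite /D -{1}h1 -h2 !mulrA divrK // divrK.
have [_ dD] := (hC D sD).1 ct.
clearbody D.
have Dff : D fq fq != 0.
  apply/eqP => h0; apply: (row_nz (r:=fq) (su3_unit sD)) => x.
  have [->|hx] := eqVneq x fq => //.
  by move/is_diag_mxP: dD; apply; rewrite eq_sym.
have e2 : (delta_mx 0 fq : 'rV[C]_3) *m A2 = D fq fq *: (delta_mx 0 fq *m A1).
  by rewrite -DA -mulmxE mulmxA diag_eig // scalemxAl.
have z1' : A1 fq k = 0.
  move: e2 => /matrixP/(_ 0 k); rewrite -!rowE !mxE z2 => /esym/eqP.
  by rewrite mulf_eq0 (negbTE Dff) /= => /eqP.
have r1 := row_zero hij hik hjk z1 z1'.
have A1i : A1 fq i != 0.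
  apply/eqP => h0; apply: (row_nz (r:=fq) u1) => x.
  by move: r1 => /matrixP/(_ 0 x); rewrite -rowE !mxE h0 mul0r.
have A1c : A1 * c = t * A1 by rewrite -h1 divrK.
have : (delta_mx 0 fq : 'rV[C]_3) *m A1 *m c = (delta_mx 0 fq *m t) *m A1.
  by rewrite -!mulmxA !mulmxE A1c.
move=> H; rewrite (diag_eig fq dt) r1 -!scalemxAl r1 scalerA mulrC -scalerA in H.
exact: scalerI H.
Qed.


End H.



Theorem lemma2p7 (R : realType) (g n : nat) (t : 'I_n -> 'M[R[i]]_3)
  (l : 'I_n) (X Y : {set 'I_n}) (i j k : 'I_3) (f : 'I_n -> 'I_3) :
  (2 <= g)%N -> (1 <= n)%N -> generic t ->
  X :&: Y = set0 -> X :|: Y = [set~ l] ->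
  i != j -> i != k -> j != k ->
  ~ exists (a b : 'I_g -> 'M[R[i]]_3) (c : 'I_n -> 'M[R[i]]_3),
      in_V t l a b c /\
      (forall m : 'I_g,
         s1_vanishes (a m) i j /\ s1_vanishes (a m) i k /\
         s1_vanishes (b m) i j /\ s1_vanishes (b m) i k) /\
      (forall q, q \in X -> s1_vanishes (c q) i j /\ s1_vanishes (c q) i k) /\
      (forall q, q \in Y -> s2_vanishes (c q) (t q) (f q) j /\
                            s2_vanishes (c q) (t q) (f q) k).
Proof.
move=> _ _ [tT [tC tG]] XY XUY hij hik hjk.
move=> [a [b [c [[[ha [hb [hc hprod]]] [hcl hconj]] [hab [hX hY]]]]]].
pose v : 'rV[R[i]]_3 := delta_mx 0 i.
have vnz : v != 0 := @delta_nz R i.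
pose lam q := if q == l then t l i i else if q \in X then c q i i
              else t q (f q) (f q).
have hv : forall q, v *m c q = lam q *: v /\ eigenvalue (t q) (lam q).
  move=> q; rewrite /lam.
  have [->|ql] := eqVneq q l.
    rewrite hcl; split; first exact: (diag_eig i (tT l).2).
    by apply/eigenvalueP; exists v => //; exact: (diag_eig i (tT l).2).
  case: ifP => qX.
    have [h1 h2] := hX q qX.
    have e := row_zero hij hik hjk h1 h2.
    split; first exact: e.
    have [P [sP hP]] := hconj q.
    exact: (conj_eig (su3_unit sP) hP e vnz).
  have qY : q \in Y.
    have : q \in X :|: Y by rewrite XUY !inE.
    by rewrite inE qX.
  have [h1 h2] := hY q qY.
  split; first exact: (ycase hij hik hjk (tC q) (tT q).2 h1 h2).
  apply/eigenvalueP; exists (delta_mx 0 (f q)); last exact: (@delta_nz R).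
  exact: (diag_eig (f q) (tT q).2).
have := tG lam (fun q => (hv q).2); apply/negP; rewrite negbK.
have hL : v *m (\prod_(m < g) commG (a m) (b m)) = v.
  rewrite (@prod_eig _ _ _ (fun _ => 1)) ?big1_eq ?scale1r // => m.
  idtac.
  have [u1 u2] := hab m.
  have [u3 u4] := (hab m).2.2.
  apply: (comm_eig (su3_unit (ha m)) (su3_unit (hb m)) _ _ vnz).
    exact: (row_zero hij hik hjk u1 (hab m).2.1).
  exact: (row_zero hij hik hjk u3 u4).
have hR : v *m (\prod_(q < n) c q) = (\prod_q lam q) *: v.
  by apply: prod_eig => q; exact: (hv q).1.
move: hR; rewrite -hprod hL => /eqP; rewrite -subr_eq0 -{1}(scale1r v) -scalerBl.
by rewrite scaler_eq0 (negbTE vnz) orbF subr_eq0 eq_sym.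
Qed.
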